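(* In the single-deceiver single-oblivious quadratic setting of the context, let $\mathcal{M}\subset[N]$ be a set of players with $r_{i,1}\neq0$ and $\operatorname{sgn}(r_{i,1})=\operatorname{sgn}(r_{1,1})$ for all $i\in\mathcal{M}$, and suppose $\varepsilon_1r_{1,1}q_1q_3<0$. Then the set $\Omega$ of attainable values is nonempty, and there is a nonempty subset $\Omega^*\subset\Omega$ such that for every $J^{\mathrm{ref}}\in\Omega^*$ there exists $\delta^*\in\Delta_1$ with $J_1(x_{\delta^*})=J^{\mathrm{ref}}$, $\varepsilon_1\frac{d}{d\delta}J_1(x_\delta)\big|_{\delta=\delta^*}<0$, and $$J_i(x_{\delta^*})<J_i(x^* )\qquad\forall i\in\mathcal{M}\cup\{1\}.$$
   Context: Quadratic game: $J_i(x)=\frac12x^\top Q_ix+b_i^\top x+p_i$, $Q_i\in\mathbb{R}^{N\times N}$ symmetric, $b_i\in\mathbb{R}^N$, $p_i\in\mathbb{R}$. $(Q)_{j:}$ = $j$-th row, $(Q)_{:j}$ = $j$-th column, $(b)_j$ = $j$-th entry; $[Q]^{d,1}$ is $Q$ with row $d$ and column $1$ removed, $[Q]^{d,\sim}$ is $Q$ with only row $d$ removed. $\mathcal{Q}$ is the matrix with $m$-th row $(Q_m)_{m:}$, $\mathcal{B}$ the vector with $m$-th entry $(b_m)_m$. Player 1 is the only deceiver and deceives only player $d\neq1$. $\bar{\mathcal{Q}}$ is the $N\times N$ matrix whose only nonzero row is row $d$, equal to $(Q_d)_{1:}$; $\bar{\mathcal{B}}$ the vector whose only nonzero entry is entry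 $d$, equal to $(b_d)_1$. For $\delta\in\mathbb{R}$, $\mathcal{Q}_\delta=\mathcal{Q}+\delta\bar{\mathcal{Q}}$, $\mathcal{B}_\delta=\mathcal{B}+\delta\bar{\mathcal{B}}$. Fix $k>0$; assume $-k\mathcal{Q}$ is Hurwitz and $[\mathcal{Q}]^{d,1}$ is invertible. $x^*=-\mathcal{Q}^{-1}\mathcal{B}$ (the Nash equilibrium); $\Delta_1=\{\delta\in\mathbb{R}:-k\mathcal{Q}_\delta\text{ Hurwitz}\}$; for $\delta\in\Delta_1$, $x_\delta=-\mathcal{Q}_\delta^{-1}\mathcal{B}_\delta$ (the deceptive Nash equilibrium). $\Phi=\begin{bmatrix}1\\-([\mathcal{Q}]^{d,1})^{-1}([\mathcal{Q}]^{d,\sim})_{:1}\end{bmatrix}\in\mathbb{R}^N$; $q_1=-\big((b_d)_1+(Q_d)_{1:}x^*\big)$, $q_2=(Q_d)_{1:}\Phi$, $q_3=(Q_d)_{d:}\Phi$; $r_{i,2}=\frac12\Phi^\top Q_i\Phi$, $r_{i,1}=(Q_ix^*+b_i)^\top\Phi$. Given a nonzero constant $\varepsilon_1$, a value $J^{\mathrm{ref}}\in\mathbb{R}$ is attainable if there exists $\delta^*\in\Delta_1$ with $J_1(x_{\delta^*})=J^{\mathrm{ref}}$ and $\varepsilon_1\frac{d}{d\delta}J_1(x_\delta)\big|_{\delta=\delta^*}<0$; $\Omega$ is the set of attainable values. *)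

(* Defs.v *)
From HB Require Import structures.
From mathcomp Require Import all_boot all_order all_algebra.
From mathcomp Require Import complex.
From mathcomp Require Import all_classical all_reals all_analysis.
Set Implicit Arguments. Unset Strict Implicit. Unset Printing Implicit Defensive.
Import Order.TTheory GRing.Theory Num.Theory.
Local Open Scope ring_scope.

Section Game.
Variable R : realType.
Variable n : nat.
(* N = n.+1 players, indexed by 'I_n.+1 ; paper's player 1 is ord0. *)
Local Notation N := n.+1.

Definition hurwitz (A : 'M[R]_N) : Prop :=
  forall lam : R[i], root (char_poly (map_mx (real_complex R) A)) lam ->
    complex.Re lam < 0.

Definition cost (Q : 'M[R]_N) (b : 'cV[R]_N) (p : R) (x : 'cV[R]_N) : R :=
  2^-1 * (x^T *m Q *m x) 0 0 + (b^T *m x) 0 0 + p.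

Variables (Q : 'I_N -> 'M[R]_N) (b : 'I_N -> 'cV[R]_N) (p : 'I_N -> R).
Variable d : 'I_N.
Variable k : R.

Definition calQ : 'M[R]_N := \matrix_(m, j) Q m m j.
Definition calB : 'cV[R]_N := \col_m b m m 0.
Definition barQ : 'M[R]_N := \matrix_(m, j) (if m == d then Q d ord0 j else 0).
Definition barB : 'cV[R]_N := \col_m (if m == d then b d ord0 0 else 0).

Definition calQd (delta : R) : 'M[R]_N := calQ + delta *: barQ.
Definition calBd (delta : R) : 'cV[R]_N := calB + delta *: barB.

Definition xstar : 'cV[R]_N := - (invmx calQ *m calB).
Definition xdelta (delta : R) : 'cV[R]_N := - (invmx (calQd delta) *m calBd delta).

Definition Delta1 (delta : R) : Prop := hurwitz (- (k *: calQd delta)).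

Definition Qd1 : 'M[R]_n := col' ord0 (row' d calQ).
Definition Qdsim : 'M[R]_(n, N) := row' d calQ.

Definition Phi : 'cV[R]_N :=
  col_mx (1 : 'cV[R]_1) (- (invmx Qd1 *m col ord0 Qdsim)).

Definition q1 : R := - (b d ord0 0 + (row ord0 (Q d) *m xstar) 0 0).
Definition q2 : R := (row ord0 (Q d) *m Phi) 0 0.
Definition q3 : R := (row d (Q d) *m Phi) 0 0.
Definition r2 (i : 'I_N) : R := 2^-1 * (Phi^T *m Q i *m Phi) 0 0.
Definition r1 (i : 'I_N) : R := ((Q i *m xstar + b i)^T *m Phi) 0 0.

Definition J1delta (delta : R) : R := cost (Q ord0) (b ord0) (p ord0) (xdelta delta).

Definition attainable (eps1 Jref : R) : Prop :=
  exists deltas : R, Delta1 deltas /\ J1delta deltas = Jref /\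
    eps1 * derive1 J1delta deltas < 0.

End Game.

(* Main.v *)
Require Import Defs.
From HB Require Import structures.
From mathcomp Require Import all_boot all_order all_algebra.
From mathcomp Require Import complex.
From mathcomp Require Import all_classical all_reals all_analysis.
From mathcomp Require Import ring lra.
From mathcomp Require Import perm.
Import Order.TTheory GRing.Theory Num.Theory.
Local Open Scope ring_scope.
Section NC.
Variable R : realType.
Definition nc (z : R[i]) : R := Normc.normc z.

Lemma nc_ge0 z : 0 <= nc z.
Proof. by case: z => a b; rewrite /nc /=; apply: sqrtr_ge0. Qed.

Lemma ncM x y : nc (x * y) = nc x * nc y.
Proof. exact: Normc.normcM. Qed.

Lemma ncD x y : nc (x + y) <= nc x + nc y.
Proof. exact: (@le_normcD R x y). Qed.

Lemma ncN x : nc (- x) = nc x.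
Proof. exact: (@normcN R x). Qed.

Lemma nc_real (x : R) : nc (x%:C)%C = `|x|.
Proof. by rewrite /nc /= expr0n /= addr0 sqrtr_sqr. Qed.

Lemma nc1 : nc 1 = 1.
Proof. exact: Normc.normc1. Qed.

Lemma nc0 : nc 0 = 0.
Proof. exact: Normc.normc0. Qed.

Lemma nc_Re z : `|complex.Re z| <= nc z.
Proof.
case: z => a b; rewrite /nc /= -sqrtr_sqr.
by rewrite ler_wsqrtr // lerDl sqr_ge0.
Qed.

Lemma ncB x y : nc x - nc y <= nc (x - y).
Proof.
have := ncD (x - y) y; rewrite subrK; lra.
Qed.

Lemma nc_sum (I : Type) (r : seq I) (P : pred I) (F : I -> R[i]) :
  nc (\sum_(i <- r | P i) F i) <= \sum_(i <- r | P i) nc (F i).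
Proof.
apply: (big_ind2 (fun x y => nc x <= y)); first by rewrite nc0.
  move=> x1 x2 y1 y2 h1 h2; apply: le_trans; first exact: ncD.
  exact: lerD.
by [].
Qed.

Lemma nc_prod (I : Type) (r : seq I) (P : pred I) (F : I -> R[i]) :
  nc (\prod_(i <- r | P i) F i) = \prod_(i <- r | P i) nc (F i).
Proof. by apply: (big_morph nc ncM nc1). Qed.

Lemma nc_sign k : nc ((-1) ^+ k) = 1.
Proof. elim: k => [|k IH]; first by rewrite expr0 nc1. by rewrite exprS ncM ncN nc1 IH mul1r. Qed.

Lemma det_bound m (A : 'M[R[i]]_m) (B : R) :
  (forall i j, nc (A i j) <= B) -> nc (\det A) <= m`!%:R * B ^+ m.
Proof.
move=> hA; rewrite /determinant.
apply: le_trans; first exact: nc_sum.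
apply: (@le_trans _ _ (\sum_(s : perm.perm_of 'I_m) B ^+ m)).
  apply: ler_sum => s _; rewrite ncM nc_sign mul1r nc_prod.
  have -> : B ^+ m = \prod_(i < m) B by rewrite prodr_const card_ord.
  apply: ler_prod => i _.
  by rewrite nc_ge0 hA.
by rewrite sumr_const card_Sn mulr_natl.
Qed.


Lemma horner_char (F : fieldType) m (A : 'M[F]_m) (a : F) :
  (char_poly A).[a] = \det (a%:M - A).
Proof.
rewrite /char_poly -horner_evalE -det_map_mx; congr (\det _).
apply/matrixP => i j; rewrite !mxE /= horner_evalE.
by rewrite hornerE /= !hornerE hornerMn hornerX.
Qed.

Lemma det_add_row (F : comPzRingType) m (X Y : 'M[F]_m) (d : 'I_m) :
  (forall i j, i != d -> Y i j = 0) ->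
  \det (X + Y) = \det X + \sum_j Y d j * cofactor X d j.
Proof.
move=> hY; rewrite (expand_det_row _ d) (expand_det_row X d) -big_split /=.
apply: eq_bigr => j _.
have -> : cofactor (X + Y) d j = cofactor X d j.
  rewrite /cofactor; congr (_ * \det _); apply/matrixP => i l.
  by rewrite !mxE hY ?addr0 // eq_sym neq_lift.
by rewrite mxE mulrDl.
Qed.

Lemma le_sum_term (I : finType) (G : I -> R) i :
  (forall j, 0 <= G j) -> G i <= \sum_j G j.
Proof. by move=> h; rewrite (bigD1 i) //= lerDl sumr_ge0. Qed.

Lemma root_lower (z l : R[i]) : complex.Re z < 0 -> 0 <= complex.Re l ->
  (- complex.Re z) / (1 - complex.Re z + nc z) * (1 + nc l) <= nc (l - z).
Proof.
move=> hz hl.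
have h1 : - complex.Re z <= nc (l - z).
  have := nc_Re (l - z); rewrite raddfB /=.
  move=> h; apply: le_trans h; rewrite ler_normr; apply/orP; left; lra.
have h2 : nc l - nc z <= nc (l - z) by apply: ncB.
have hz0 := nc_ge0 z; have hl0 := nc_ge0 l.
rewrite mulrAC ler_pdivrMr; last lra.
nra.
Qed.

Lemma prod_const_seq (I : Type) (r : seq I) (x : R) :
  \prod_(z <- r) x = x ^+ size r.
Proof. by elim: r => [|a r IH]; rewrite ?big_nil ?expr0 // big_cons IH exprS. Qed.

Lemma hurwitz_unit m (A : 'M[R]_m.+1) : hurwitz A -> A \in unitmx.
Proof.
move=> hA; rewrite unitmxE unitfE; apply/negP => /eqP hd.
have := hA 0; rewrite rootE horner_char.
have -> : (0 : R[i])%:M = 0 :> 'M[R[i]]_(m.+1) by apply/matrixP=> i j; rewrite !mxE mul0rn.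
rewrite sub0r -scaleN1r detZ det_map_mx hd.
by rewrite rmorph0 mulr0 eqxx /= ltxx => /(_ isT).
Qed.

Lemma hurwitz_open m (A E : 'M[R]_m.+1) (d : 'I_m.+1) :
  (forall i j, i != d -> E i j = 0) -> hurwitz A ->
  exists2 rho, 0 < rho & forall de, `|de| < rho -> hurwitz (A + de *: E).
Proof.
move=> hE hA.
set p0 := char_poly (map_mx (real_complex R) A).
have [r hr] := closed_field_poly_normal p0.
have lc : lead_coef p0 = 1 by apply/monicP/char_poly_monic.
rewrite lc scale1r in hr.
have hroots : forall z, z \in r -> complex.Re z < 0.
  move=> z zr; apply: hA; rewrite -/p0 hr root_prod_XsubC; exact: zr.
have sr : size r = m.+1.
  have := size_char_poly (map_mx (real_complex R) A).
  by rewrite -/p0 hr size_prod_XsubC => -[].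
pose c (z : R[i]) := (- complex.Re z) / (1 - complex.Re z + nc z).
pose C0 := \prod_(z <- r) c z.
have C0pos : 0 < C0.
  rewrite /C0 big_seq; apply: prodr_gt0 => z /hroots hz.
  have := nc_ge0 z => hn.
  by rewrite /c divr_gt0 //; lra.
have lower : forall l, 0 <= complex.Re l ->
    C0 * (1 + nc l) ^+ m.+1 <= nc p0.[l].
  move=> l hl.
  rewrite hr horner_prod nc_prod -sr -prod_const_seq /C0 -big_split /=.
  rewrite big_seq [X in _ <= X]big_seq; apply: ler_prod => z zr.
  have hz := hroots z zr; have := nc_ge0 z => hn; have := nc_ge0 l => hln.
  rewrite hornerXsubC root_lower // andbT mulr_ge0 //; last lra.
  by rewrite /c divr_ge0 //; lra.
pose SA := \sum_i \sum_j `|A i j|.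
have SA0 : 0 <= SA by apply: sumr_ge0 => i _; apply: sumr_ge0.
have hSA : forall i j, `|A i j| <= SA.
  move=> i j; apply: (@le_trans _ _ (\sum_j `|A i j|)); first by apply: le_sum_term.
  by rewrite /SA; apply: le_sum_term => ?; exact: sumr_ge0.
pose K2 := 1 + SA.
pose SE := \sum_j `|E d j|.
pose K1 := SE * m`!%:R * K2 ^+ m.
have K10 : 0 <= K1 by rewrite /K1 !mulr_ge0 ?exprn_ge0 ?sumr_ge0 // /K2; lra.
exists (C0 / (K1 + 1)); first by rewrite divr_gt0 //; lra.
move=> de hde l hl; rewrite ltNge; apply/negP => hRe.
pose M := l%:M - map_mx (real_complex R) A.
pose Y := \matrix_(i, j) (real_complex R (- (de * E i j))).
have hY : forall i j, i != d -> Y i j = 0.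
  by move=> i j /hE h; rewrite mxE h mulr0 oppr0 rmorph0.
have eqM : l%:M - map_mx (real_complex R) (A + de *: E) = M + Y.
  apply/matrixP => i j; rewrite !mxE rmorphD rmorphN /= opprD addrA.
  by congr (_ - _ + _); rewrite rmorphM.
move: hl; rewrite /root horner_char eqM (@det_add_row _ _ M Y d hY) => /eqP hdet.
have hM : nc (\det M) = nc (\sum_j Y d j * cofactor M d j).
  by move: hdet => /eqP; rewrite addr_eq0 => /eqP ->; rewrite ncN.
set L := nc l.
have L0 : 0 <= L by apply: nc_ge0.
have bM : forall a b, nc (M a b) <= K2 * (1 + L).
  move=> a b; rewrite !mxE; apply: le_trans; first exact: ncD.
  rewrite ncN nc_real; have := hSA a b.
  have : nc (l *+ (a == b)) <= L by case: (a == b); rewrite ?mulr1n ?mulr0n ?nc0.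
  move=> h1 h2; rewrite /K2; nra.
have upper : nc (\sum_j Y d j * cofactor M d j) <= `|de| * K1 * (1 + L) ^+ m.
  apply: le_trans; first exact: nc_sum.
  apply: (@le_trans _ _ (\sum_j `|de| * `|E d j| * (m`!%:R * (K2 * (1 + L)) ^+ m))).
    apply: ler_sum => j _; rewrite ncM mxE nc_real normrN normrM.
    apply: ler_wpM2l; first by rewrite mulr_ge0.
    rewrite /cofactor ncM nc_sign mul1r; apply: det_bound => a b.
    by move: (bM (lift d a) (lift j b)); rewrite !mxE.
  under eq_bigr => j _ do rewrite mulrAC.
  rewrite -mulr_sumr /K1 /SE exprMn le_eqVlt; apply/orP; left; apply/eqP.
  ring.
have := lower l hRe.
rewrite /p0 horner_char -/M hM => hlow.
have P0 : 0 < (1 + L) ^+ m by apply: exprn_gt0; lra.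
have hde' : `|de| * (K1 + 1) < C0 by rewrite -ltr_pdivlMr //; lra.
have := le_trans hlow upper; rewrite exprS.
set P := (1 + L) ^+ m.
rewrite -/L => hh.
have h1 : 0 < (C0 - `|de| * (K1 + 1)) * P by apply: mulr_gt0 => //; lra.
have h2 : 0 <= C0 * L * P by rewrite !mulr_ge0 // ?ltW.
have h3 : 0 <= `|de| * P by rewrite mulr_ge0 // ?ltW.
have : (0:R) < 0 by nra.
by rewrite ltxx.
Qed.

End NC.

Lemma mxE_add (K : pzRingType) m p (A B : 'M[K]_(m, p)) i j :
  (A + B) i j = A i j + B i j.
Proof. by rewrite mxE. Qed.
Lemma mxE_scale (K : pzRingType) m p (a : K) (A : 'M[K]_(m, p)) i j :
  (a *: A) i j = a * A i j.
Proof. by rewrite mxE. Qed.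
Lemma mxE_opp (K : pzRingType) m p (A : 'M[K]_(m, p)) i j :
  (- A) i j = - A i j.
Proof. by rewrite mxE. Qed.

Section Alg.
Variable R : realType.
Variable n : nat.
Variables (Q : 'I_n.+1 -> 'M[R]_n.+1) (b : 'I_n.+1 -> 'cV[R]_n.+1) (d : 'I_n.+1).

Lemma barQ_mul (v : 'cV[R]_n.+1) i :
  (barQ Q d *m v) i 0 = (i == d)%:R * (row ord0 (Q d) *m v) 0 0.
Proof.
rewrite !mxE; case: eqP => [->|hne].
  by rewrite /= mulr1n mul1r; apply: eq_bigr => j _; rewrite !mxE eqxx.
rewrite /= mulr0n mul0r big1 // => j _; rewrite mxE.
by case: eqP => // _; rewrite mul0r.
Qed.

Lemma Qdsim_Phi : Qd1 Q d \in unitmx -> Qdsim Q d *m Phi Q d = 0.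
Proof.
move=> hu.
have hl : lsubmx (Qdsim Q d : 'M[R]_(n, 1 + n)) = col ord0 (Qdsim Q d).
  apply/matrixP => i j; rewrite !mxE ord1; congr (_ _ _); exact: val_inj.
have hr : rsubmx (Qdsim Q d : 'M[R]_(n, 1 + n)) = Qd1 Q d.
  apply/matrixP => i j; rewrite !mxE; congr (_ _ _); exact: val_inj.
have key : forall (A : 'M[R]_(n, 1 + n)) (w : 'M[R]_(n, 1)),
    A *m col_mx (1 : 'cV[R]_1) w = lsubmx A *m 1 + rsubmx A *m w.
  by move=> A w; rewrite -{1}(hsubmxK A) mul_row_col.
have E1 := key (Qdsim Q d) (- (invmx (Qd1 Q d) *m col ord0 (Qdsim Q d))).
rewrite hl hr mulmx1 mulmxN mulKVmx // subrr in E1; exact: E1.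
Qed.

Lemma calQ_Phi i : Qd1 Q d \in unitmx ->
  (calQ Q *m Phi Q d) i 0 = (i == d)%:R * q3 Q d.
Proof.
move=> hu; case: (unliftP d i) => [i' ->|->].
  rewrite eq_sym (negbTE (neq_lift d i')) /= mulr0n mul0r.
  transitivity ((Qdsim Q d *m Phi Q d) i' 0); last by rewrite Qdsim_Phi // mxE.
  by rewrite !mxE; apply: eq_bigr => j _; rewrite !mxE.
by rewrite eqxx /= mulr1n mul1r /q3 !mxE; apply: eq_bigr => j _; rewrite !mxE.
Qed.

Lemma xdelta_eq de : calQ Q \in unitmx -> Qd1 Q d \in unitmx ->
  calQd Q d de \in unitmx -> q3 Q d + de * q2 Q d != 0 ->
  xdelta Q b d de =
  xstar Q b + (de * q1 Q b d / (q3 Q d + de * q2 Q d)) *: Phi Q d.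
Proof.
move=> hQ hu hQd hden.
set t := de * q1 Q b d / (q3 Q d + de * q2 Q d).
set y := xstar Q b + t *: Phi Q d.
have hx : calQ Q *m xstar Q b = - calB b by rewrite /xstar mulmxN mulKVmx.
have hr : (row ord0 (Q d) *m y) 0 0 = - q1 Q b d - b d ord0 0 + t * q2 Q d.
  rewrite mulmxDr -scalemxAr mxE_add mxE_scale /q1 /q2; congr (_ + _).
  lra.
have hy : calQd Q d de *m y = - calBd b d de.
  apply/matrixP => i j; rewrite ord1.
  rewrite /calQd mulmxDl -scalemxAl mxE_add mxE_scale barQ_mul hr.
  rewrite mulmxDr -scalemxAr hx mxE_add mxE_scale calQ_Phi //.
  rewrite /calBd !mxE.
  case: (eqVneq i d) => [->|hne]; last first.
    by rewrite /= mulr0n !mul0r !mulr0; lra.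
  rewrite /= mulr1n !mul1r /t.
  by field.
rewrite /xdelta -mulmxN -hy mulKmx //.
Qed.

Lemma tr11 (A : 'M[R]_1) : A^T 0 0 = A 0 0.
Proof. by rewrite mxE. Qed.

Lemma cost_line (Qi : 'M[R]_n.+1) (bi : 'cV[R]_n.+1) pi x v t : Qi^T = Qi ->
  cost Qi bi pi (x + t *: v) = cost Qi bi pi x + t * ((Qi *m x + bi)^T *m v) 0 0
    + t ^+ 2 * (2^-1 * (v^T *m Qi *m v) 0 0).
Proof.
move=> hs.
have hc : (v^T *m Qi *m x) 0 0 = (x^T *m Qi *m v) 0 0.
  by rewrite -tr11 !trmx_mul trmxK hs mulmxA.
rewrite /cost.
have -> : (x + t *: v)^T = x^T + t *: v^T by rewrite linearD linearZ.
have -> : (Qi *m x + bi)^T = x^T *m Qi + bi^T by rewrite linearD /= trmx_mul hs.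
rewrite !mulmxDl !mulmxDr -!scalemxAl -!scalemxAr.
rewrite !mxE_add !mxE_scale hc.
by field.
Qed.

End Alg.

Section T.
Variable R : realType.
Definition tfun (q1 q2 q3 : R) (y : R) := y * q1 / (q3 + y * q2).

Lemma is_derive_tfun (q1 q2 q3 x : R) : q3 + x * q2 != 0 ->
  is_derive x (1:R) (tfun q1 q2 q3) (q1 * q3 / (q3 + x * q2) ^+ 2).
Proof.
move=> hx.
have hD : is_derive x (1:R) (fun y : R => q3 + y * q2) q2.
  by apply: is_derive_eq; rewrite scaler0 add0r mul1r add0r; rewrite /GRing.scale /= mulr1.
have hV : is_derive x (1:R) (fun y : R => (q3 + y * q2)^-1) (- (q3 + x * q2) ^- 2 *: q2).
  apply: DeriveDef; first by apply: derivableV => //; case: hD.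
  by rewrite deriveV // derive_val.
have hL : is_derive x (1:R) (fun y : R => y * q1) q1.
  by apply: is_derive_eq; rewrite scaler0 add0r /GRing.scale /= mulr1.
have hM := @is_deriveM R R (fun y => y * q1) (fun y => (q3 + y * q2)^-1) x 1 _ _ hL hV.
rewrite /tfun; apply: is_derive_eq hM _.
rewrite /GRing.scale /=.
by field.
Qed.

Lemma is_derive_g (q1 q2 q3 J0 a c x : R) : q3 + x * q2 != 0 ->
  is_derive x (1:R) (fun y => J0 + tfun q1 q2 q3 y * a + tfun q1 q2 q3 y ^+ 2 * c)
    ((a + 2 * c * tfun q1 q2 q3 x) * (q1 * q3 / (q3 + x * q2) ^+ 2)).
Proof.
move=> hx; have ht := @is_derive_tfun q1 q2 q3 x hx.
apply: is_derive_eq.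
rewrite /GRing.scale /=.
ring.
Qed.
End T.
Arguments tfun {R}.

Lemma tb (R : realType) (ds r : R) (P : R -> Prop) : 0 < r - `|ds| -> (forall y, `|y| < r -> P y) -> \forall y \near (ds : R^o), P y.
Proof.
move=> hr hP; apply/nbhs0P.
apply: filterS (nbhs0_lt hr) => e /= he; apply: hP.
apply: le_lt_trans (ler_normD _ _) _; lra.
Qed.

Theorem theorem3 (R : realType) (n : nat)
  (Q : 'I_n.+1 -> 'M[R]_n.+1) (b : 'I_n.+1 -> 'cV[R]_n.+1) (p : 'I_n.+1 -> R)
  (d : 'I_n.+1) (k eps1 : R) (M : {set 'I_n.+1})
  (hQsym : forall i, (Q i)^T = Q i)
  (hd : d != ord0)
  (hk : 0 < k)
  (hHur : hurwitz (- (k *: calQ Q)))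
  (hinv : Qd1 Q d \in unitmx)
  (heps : eps1 != 0)
  (hM : forall i, i \in M ->
          r1 Q b d i != 0 /\ Num.sg (r1 Q b d i) = Num.sg (r1 Q b d ord0))
  (hsign : eps1 * r1 Q b d ord0 * q1 Q b d * q3 Q d < 0) :
  (exists Jref, attainable Q b p d k eps1 Jref) /\
  exists Omegastar : R -> Prop,
    (forall Jref, Omegastar Jref -> attainable Q b p d k eps1 Jref) /\
    (exists Jref, Omegastar Jref) /\
    forall Jref, Omegastar Jref ->
      exists deltas : R,
        Delta1 Q d k deltas /\
        J1delta Q b p d deltas = Jref /\
        eps1 * derive1 (J1delta Q b p d) deltas < 0 /\
        forall i, i \in M :|: [set ord0] ->
          cost (Q i) (b i) (p i) (xdelta Q b d deltas) <
          cost (Q i) (b i) (p i) (xstar Q b).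
Proof.
set r11 := r1 Q b d ord0.
set qq1 := q1 Q b d. set qq2 := q2 Q d. set qq3 := q3 Q d.
move: hsign hM; rewrite -/r11 -/qq1 -/qq3 => hsign hM.
have hr11 : r11 != 0.
  by apply: contraTneq hsign => ->; rewrite mulr0 !mul0r ltxx.
have hq1 : qq1 != 0.
  by apply: contraTneq hsign => ->; rewrite mulr0 mul0r ltxx.
have hq3 : qq3 != 0.
  by apply: contraTneq hsign => ->; rewrite mulr0 ltxx.
have hk0 : k != 0 := lt0r_neq0 hk.
have unitOf : forall X : 'M[R]_n.+1, hurwitz (- (k *: X)) -> X \in unitmx.
  by move=> X /hurwitz_unit; rewrite -scaleNr unitmxZ // unitfE oppr_eq0.
have hQu := unitOf _ hHur.
have hE : forall i j, i != d -> (- (k *: barQ Q d)) i j = 0.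
  by move=> i j /negbTE h; rewrite !mxE h mulr0 oppr0.
have [rhoH rhoH0 hH] := @hurwitz_open R n _ _ d hE hHur.
have hDelta : forall y, `|y| < rhoH -> Delta1 Q d k y.
  move=> y /hH; rewrite /Delta1.
  have -> : - (k *: calQd Q d y) = - (k *: calQ Q) + y *: - (k *: barQ Q d) => //.
  apply/matrixP => i j; rewrite /calQd.
  rewrite !(mxE_opp, mxE_add, mxE_scale); ring.
have nabs : forall x : R, - `|x| <= x.
  by move=> x; rewrite lerNl ler_normr lexx orbT.
have sqn : forall x : R, `|x| ^+ 2 = x ^+ 2 by move=> x; exact: real_normK (num_real x).
set rho0 := Num.min rhoH (`|qq3| / (2 * (`|qq2| + 1))).
have q20 := normr_ge0 qq2.
have q3p : 0 < `|qq3| by rewrite normr_gt0.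
have rho0pos : 0 < rho0.
  by rewrite /rho0 lt_min rhoH0 /= divr_gt0 //; lra.
have hloc : forall y, `|y| < rho0 ->
    Delta1 Q d k y /\ `|y| * (`|qq2| + 1) * 2 < `|qq3|.
  move=> y; rewrite /rho0 lt_min => /andP [h1 h2]; split; first exact: hDelta.
  by move: h2; rewrite ltr_pdivlMr; lra.
have hden : forall y, `|y| * (`|qq2| + 1) * 2 < `|qq3| -> 0 < qq3 * (qq3 + y * qq2).
  move=> y hy.
  have hA : - (`|qq3| * `|y * qq2|) <= qq3 * (y * qq2) by rewrite -normrM.
  have hB : `|y * qq2| * 2 < `|qq3|.
    rewrite normrM; have := normr_ge0 y; nra.
  have hC := sqn qq3.
  have : qq3 ^+ 2 + qq3 * (y * qq2) > 0 by nra.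
  by rewrite mulrDr expr2.
have hcost : forall i y, `|y| < rho0 ->
    cost (Q i) (b i) (p i) (xdelta Q b d y) =
    cost (Q i) (b i) (p i) (xstar Q b) + tfun qq1 qq2 qq3 y * r1 Q b d i
      + tfun qq1 qq2 qq3 y ^+ 2 * r2 Q d i.
  move=> i y hy; have [hD1 hB] := hloc y hy.
  have hd0 : qq3 + y * qq2 != 0.
    by have := hden y hB; apply: contraTneq => ->; rewrite mulr0 ltxx.
  rewrite (@xdelta_eq R n Q b d y hQu hinv (unitOf _ hD1) hd0).
  by rewrite (@cost_line R n _ _ _ _ _ _ (hQsym i)).
set S := M :|: [set ord0].
have hS : forall i, i \in S ->
    r1 Q b d i != 0 /\ Num.sg (r1 Q b d i) = Num.sg r11.
  by move=> i; rewrite !inE => /orP [/hM // | /eqP ->].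
have hall : \forall y \near (0 : R^o), forall i, i \in S ->
    `|y| * (4 * `|qq1| * `|r2 Q d i|) < `|r1 Q b d i| * `|qq3|.
  apply: (filter_forall (F := nbhs (0:R^o)) (f := fun i (y : R^o) => i \in S ->
    `|y| * (4 * `|qq1| * `|r2 Q d i|) < `|r1 Q b d i| * `|qq3|)) => i.
  case: (boolP (i \in S)) => hi; last by apply: nearW => y /=.
  have [hri _] := hS i hi.
  set X := 4 * `|qq1| * `|r2 Q d i|.
  have X0 : 0 <= X by rewrite /X !mulr_ge0.
  have ri0 : 0 < `|r1 Q b d i| by rewrite normr_gt0.
  have epos : 0 < `|r1 Q b d i| * `|qq3| / (X + 1).
    by rewrite divr_gt0 ?mulr_gt0 //; lra.
  apply: filterS (nbhs0_lt epos) => y /= hy _.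
  move: hy; rewrite ltr_pdivlMr; last lra.
  move=> hy; have := normr_ge0 y; nra.
have hcomb : \forall y \near (0 : R^o), `|y| < rho0 /\ (forall i, i \in S ->
    `|y| * (4 * `|qq1| * `|r2 Q d i|) < `|r1 Q b d i| * `|qq3|).
  by apply: filterS (filterI (nbhs0_lt rho0pos) hall) => y [h1 h2]; split.
have [e e0 he] := iffLR nbhs_norm0P hcomb.
have {}e0 : (0:R) < e := e0.
pose c := r11 * qq1 * qq3.
have c0 : c != 0 by rewrite /c !mulf_neq0.
have cp : 0 < `|c| by rewrite normr_gt0.
pose ds := - (e / 2) * (c / (`|c| + 1)).
have hds : `|ds| < e.
  have h1 : `|c / (`|c| + 1)| < 1.
    rewrite normrM normfV (@ger0_norm _ (`|c| + 1)); last lra.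
    by rewrite ltr_pdivrMr; lra.
  rewrite /ds normrM normrN (@ger0_norm _ (e / 2)); last lra.
  have := normr_ge0 (c / (`|c| + 1)); nra.
have hdsc : ds * c < 0.
  have hc2 : 0 < c ^+ 2 by rewrite -sqn exprn_gt0.
  have hq : 0 < c * (c / (`|c| + 1)) by rewrite mulrA -expr2 divr_gt0 //; lra.
  rewrite /ds; nra.
have [hds0 hcond] := he ds hds.
have [hD1 hB] := hloc ds hds0.
have hpos := hden ds hB.
have hd0 : qq3 + ds * qq2 != 0.
  by apply: contraTneq hpos => ->; rewrite mulr0 ltxx.
set t := tfun qq1 qq2 qq3 ds.
have ht : t * (qq3 + ds * qq2) = ds * qq1 by rewrite /t /tfun; field.
have hneg : r11 * t < 0.
  have hE2 : (r11 * t) * (qq3 * (qq3 + ds * qq2)) = ds * c.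
    transitivity (r11 * qq3 * (t * (qq3 + ds * qq2))); first by ring.
    by rewrite ht /c; ring.
  nra.
have hu2 : `|ds * qq2| * 2 < `|qq3|.
  rewrite normrM; have := normr_ge0 ds; nra.
have tri := ler_normD (qq3 + ds * qq2) (- (ds * qq2)).
rewrite normrN addrK in tri.
have hnt : `|t| * `|qq3 + ds * qq2| = `|ds| * `|qq1| by rewrite -!normrM ht.
have habs_t : `|t| * `|qq3| <= 2 * (`|ds| * `|qq1|).
  have := normr_ge0 t; nra.
have hsmall : forall i, i \in S -> 2 * `|r2 Q d i| * `|t| < `|r1 Q b d i|.
  move=> i hi; have := hcond i hi => hc.
  have h2 := normr_ge0 (r2 Q d i).
  have hm : 2 * `|r2 Q d i| * (`|t| * `|qq3|) <= 2 * `|r2 Q d i| * (2 * (`|ds| * `|qq1|)).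
    by apply: ler_wpM2l => //; lra.
  suff : 2 * `|r2 Q d i| * `|t| * `|qq3| < `|r1 Q b d i| * `|qq3| by rewrite ltr_pM2r.
  lra.
have hsgn : forall i, i \in S -> r1 Q b d i * t < 0.
  move=> i hi; have [_ hsg] := hS i hi.
  by rewrite -(sgr_cp0 _).1.2 sgrM hsg -sgrM (sgr_cp0 _).1.2.
pose J0 := cost (Q ord0) (b ord0) (p ord0) (xstar Q b).
pose g := fun y : R => J0 + tfun qq1 qq2 qq3 y * r11 + tfun qq1 qq2 qq3 y ^+ 2 * r2 Q d ord0.
have hng : \forall y \near (ds : R^o), J1delta Q b p d y = g y.
  apply: (@tb R ds rho0) => [|y hy]; first lra.
  by rewrite /J1delta (hcost ord0 y hy).
have hder : derive1 (J1delta Q b p d) ds =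
    (r11 + 2 * r2 Q d ord0 * t) * (qq1 * qq3 / (qq3 + ds * qq2) ^+ 2).
  rewrite derive1E (near_eq_derive (1 : R^o) hng).
  have HH := @derive_val _ _ _ _ _ _ _ (@is_derive_g R qq1 qq2 qq3 J0 r11 (r2 Q d ord0) ds hd0).
  exact: HH.
have hdneg : eps1 * derive1 (J1delta Q b p d) ds < 0.
  have h0S : ord0 \in S by rewrite !inE eqxx orbT.
  have hs0 := hsmall _ h0S.
  have hY : 0 < r11 * (r11 + 2 * r2 Q d ord0 * t).
    have h1 : - (`|r11| * (2 * `|r2 Q d ord0| * `|t|)) <= r11 * (2 * r2 Q d ord0 * t).
      by have := nabs (r11 * (2 * r2 Q d ord0 * t)); rewrite !normrM normr_nat.
    have h3 := sqn r11.
    have r11p : 0 < `|r11| by rewrite normr_gt0.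
    have hp : 0 < `|r11| * (`|r11| - 2 * `|r2 Q d ord0| * `|t|).
      by apply: mulr_gt0 => //; lra.
    rewrite mulrDr; move: h3; rewrite !expr2 => h3; lra.
  have hZ : eps1 * (r11 + 2 * r2 Q d ord0 * t) * qq1 * qq3 < 0.
    have hr2 : 0 < r11 ^+ 2 by rewrite -sqn exprn_gt0 // normr_gt0.
    rewrite -(pmulr_llt0 _ hr2).
    have -> : (eps1 * (r11 + 2 * r2 Q d ord0 * t) * qq1 * qq3) * r11 ^+ 2 =
      (eps1 * r11 * qq1 * qq3) * (r11 * (r11 + 2 * r2 Q d ord0 * t)) by ring.
    by rewrite (pmulr_llt0 _ hY).
  have hD2 : 0 < (qq3 + ds * qq2) ^+ 2 by rewrite exprn_even_gt0.
  rewrite hder.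
  have -> : eps1 * ((r11 + 2 * r2 Q d ord0 * t) * (qq1 * qq3 / (qq3 + ds * qq2) ^+ 2))
    = (eps1 * (r11 + 2 * r2 Q d ord0 * t) * qq1 * qq3) / (qq3 + ds * qq2) ^+ 2 by ring.
  by rewrite ltr_pdivrMr // mul0r.
have hcosts : forall i, i \in S ->
    cost (Q i) (b i) (p i) (xdelta Q b d ds) < cost (Q i) (b i) (p i) (xstar Q b).
  move=> i hi; rewrite (hcost i ds hds0) -/t.
  have ha := hsgn i hi; have hs := hsmall i hi.
  have f1 : t ^+ 2 * r2 Q d i <= `|t| * `|t| * `|r2 Q d i|.
    by apply: le_trans (ler_norm _) _; rewrite normrM normrX expr2.
  have f2 : 2 * `|r2 Q d i| * `|t| * `|t| <= `|r1 Q b d i| * `|t|.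
    by apply: ler_wpM2r; [exact: normr_ge0 | exact: ltW].
  have f3 : `|r1 Q b d i| * `|t| = - (r1 Q b d i * t).
    by rewrite -normrM ltr0_norm.
  lra.
split.
  by exists (J1delta Q b p d ds), ds.
exists (fun J => J = J1delta Q b p d ds); split.
  by move=> J ->; exists ds.
split; first by exists (J1delta Q b p d ds).
by move=> J ->; exists ds.
Qed.
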